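(* Let $0<\delta<\frac12$, let $f\in\mathrm{Diff}_+^{1,\delta}(I)$ and let $G\subseteq\mathrm{Diff}_0^3(I)$. Then for every $C>0$ the set $A_C=\{\log(g'): g\in G,\ p_\delta(g\circ f)\le C\}$ has compact closure in the space $C(I)$ of continuous real functions on $I$ with the sup metric.
   Context: $I=[0,1]$. $\mathrm{Diff}_+^1(I)$ is the set of $C^1$ diffeomorphisms of $I$ fixing $0$ and $1$; $\mathrm{Diff}_+^{1,\delta}(I)$ is the set of $f\in\mathrm{Diff}_+^1(I)$ with $f'$ Hölder of exponent $\delta$. $\mathrm{Diff}_0^3(I)$ is the set of $C^3$ diffeomorphisms $f$ of $I$ fixing $0$ and $1$ with $f'(0)=f'(1)=1$. For $f\in\mathrm{Diff}_+^{1,\delta}(I)$, $p_\delta(f)=|\log(f'(0))|+\sup_{t_1\ne t_2\in I}\frac{|\log(f'(t_2))-\log(f'(t_1))|}{|t_2-t_1|^\delta}$. *)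

(* Defs.v *)
From HB Require Import structures.
From mathcomp Require Import all_boot all_order all_algebra.
From mathcomp Require Import all_classical all_reals all_analysis.
Set Implicit Arguments. Unset Strict Implicit. Unset Printing Implicit Defensive.
Import Order.TTheory GRing.Theory Num.Theory.
Import numFieldNormedType.Exports.
Local Open Scope classical_set_scope.
Local Open Scope ring_scope.

Section Defs.
Variable R : realType.

Definition II : set R := `[0, 1]%classic.

Definition Ideriv (f : R -> R) (x d : R) : Prop :=
  (fun y => (f y - f x) / (y - x)) @ within (II `\ x) (nbhs x) --> d.

Fixpoint CkI (k : nat) (f : R -> R) : Prop :=
  match k with
  | 0%N => {within II, continuous f}
  | k'.+1 => exists f1 : R -> R, (forall x, II x -> Ideriv f x (f1 x)) /\ CkI k' f1
  end.

Definition DiffI (k : nat) (f : R -> R) : Prop :=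
  f 0 = 0 /\ f 1 = 1 /\
  (exists h : R -> R,
     (forall x, II x -> II (f x) /\ II (h x) /\ h (f x) = x /\ f (h x) = x) /\
     CkI k f /\ CkI k h).

Definition DiffI1delta (delta : R) (f : R -> R) : Prop :=
  DiffI 1 f /\
  exists f1 : R -> R, (forall x, II x -> Ideriv f x (f1 x)) /\
    exists K : R, forall t1 t2, II t1 -> II t2 ->
      `|f1 t2 - f1 t1| <= K * (`|t2 - t1| `^ delta).

Definition Diff03 (g : R -> R) : Prop :=
  DiffI 3 g /\
  exists g1 : R -> R, (forall x, II x -> Ideriv g x (g1 x)) /\ g1 0 = 1 /\ g1 1 = 1.

Definition pdelta (delta : R) (f1 : R -> R) : \bar R :=
  (`|ln (f1 0)|%:E +
   ereal_sup [set r : \bar R | exists t1 t2 : R, II t1 /\ II t2 /\ t1 <> t2 /\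
       r = (`|ln (f1 t2) - ln (f1 t1)| / (`|t2 - t1| `^ delta))%:E])%E.

(* A_C = { log g' : g in G, p_delta(g o f) <= C }, as functions R -> R
   (only their values on I matter in the topology used below) *)
Definition A_C (delta C : R) (f : R -> R) (G : set (R -> R)) : set (R -> R) :=
  [set phi | exists g g1 h1 : R -> R,
     G g /\ (forall x, II x -> Ideriv g x (g1 x)) /\
     (forall x, II x -> Ideriv (g \o f) x (h1 x)) /\
     (pdelta delta h1 <= C%:E)%E /\
     phi = (fun x => ln (g1 x))].

End Defs.

(* Main.v *)
Require Import Defs.
From HB Require Import structures.
From mathcomp Require Import all_boot all_order all_algebra.
From mathcomp Require Import all_classical all_reals all_analysis.
From mathcomp Require Import ring lra.
Import Order.TTheory GRing.Theory Num.Theory.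
Import numFieldNormedType.Exports.
Local Open Scope classical_set_scope.
Local Open Scope ring_scope.
Section S.
Variable R : realType.

Lemma withinRP (A : set R) (x : R) (P : R -> Prop) :
  (\forall y \near within A (nbhs x), P y) <->
  exists2 e : R, 0 < e & forall y, A y -> `|y - x| < e -> P y.
Proof.
rewrite near_withinE; split.
  move=> /nbhs_ballP [e e0 H]; exists e => // y Ay yx; apply: H => //.
  by rewrite /ball /= distrC.
move=> [e e0 H]; apply/nbhs_ballP; exists e => // y; rewrite /ball /= => xy Ay.
by apply: H => //; rewrite distrC.
Qed.

Lemma cvg_withinRP (A : set R) (x : R) (F : R -> R) (l : R) :
  F @ within A (nbhs x) --> l <->
  forall e, 0 < e -> exists2 eta : R, 0 < eta &
     forall y, A y -> `|y - x| < eta -> `|F y - l| < e.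
Proof.
rewrite cvgrPdist_lt; split.
  move=> H e e0; have /withinRP [eta eta0 Heta] := H e e0.
  by exists eta => // y Ay yx; rewrite distrC; apply: Heta.
move=> H e e0; apply/withinRP; have [eta eta0 Heta] := H e e0.
by exists eta => // y Ay yx; rewrite distrC; apply: Heta.
Qed.
Lemma IIP (y : R) : @II R y <-> 0 <= y <= 1.
Proof. by rewrite /II /= in_itv. Qed.

Lemma IideriveP (F : R -> R) (x d : R) : Ideriv F x d <->
  forall e, 0 < e -> exists2 eta : R, 0 < eta &
   forall y, II y -> y != x -> `|y - x| < eta -> `|(F y - F x) / (y - x) - d| < e.
Proof.
rewrite /Ideriv cvg_withinRP; split.
  move=> H e e0; have [eta eta0 He] := H e e0; exists eta => // y Iy yx.
  by apply: He; split => //; apply/eqP.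
move=> H e e0; have [eta eta0 He] := H e e0; exists eta => // y [Iy yx].
by apply: He => //; apply/eqP.
Qed.

Lemma II_pick (x eta : R) : II x -> 0 < eta ->
  exists y, [/\ II y, y != x & `|y - x| < eta].
Proof.
move=> /IIP /andP[x0 x1] eta0.
set r := Num.min (eta / 2) (1 / 2).
have r0 : 0 < r by rewrite lt_min; apply/andP; split; lra.
have r1 : r <= eta / 2 by rewrite ge_min lexx.
have r2 : r <= 1 / 2 by rewrite ge_min lexx orbT.
have [xh|xh] := lerP x (1/2).
  exists (x + r); split.
  - apply/IIP; apply/andP; split; lra.
  - apply/eqP => H; lra.
  - rewrite addrAC subrr add0r gtr0_norm //; lra.
exists (x - r); split.
- apply/IIP; apply/andP; split; lra.
- apply/eqP => H; lra.
- rewrite addrAC subrr add0r normrN gtr0_norm //; lra.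
Qed.

Lemma Ideriv_unique (F : R -> R) (x a b : R) : II x -> Ideriv F x a -> Ideriv F x b -> a = b.
Proof.
move=> Ix /IideriveP Ha /IideriveP Hb; apply/eqP; apply/negPn/negP => ab.
have e0 : 0 < `|a - b| / 2 by rewrite divr_gt0 // normr_gt0 subr_eq0.
have [e1 e10 H1] := Ha _ e0; have [e2 e20 H2] := Hb _ e0.
have m0 : 0 < Num.min e1 e2 by rewrite lt_min e10 e20.
have [y [Iy yx yxe]] := @II_pick x _ Ix m0.
have le1 : Num.min e1 e2 <= e1 by rewrite ge_min lexx.
have le2 : Num.min e1 e2 <= e2 by rewrite ge_min lexx orbT.
have h1 := H1 y Iy yx (lt_le_trans yxe le1).
have h2 := H2 y Iy yx (lt_le_trans yxe le2).
have : `|a - b| <= `|(F y - F x) / (y - x) - a| + `|(F y - F x) / (y - x) - b|.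
  rewrite (distrC _ a); apply: le_trans (ler_normD _ _).
  by rewrite addrA subrK.
lra.
Qed.
Arguments Ideriv_unique {F x a b}.

Definition contII (F : R -> R) (x : R) := forall e, 0 < e ->
  exists2 eta : R, 0 < eta & forall y, II y -> `|y - x| < eta -> `|F y - F x| < e.

Lemma Ideriv_cont (F : R -> R) (x d : R) : Ideriv F x d -> contII F x.
Proof.
move=> /IideriveP H e e0; have [eta1 eta10 H1] := H 1 ltr01.
set k := `|d| + 1.
have k0 : 0 < k by rewrite /k; have := normr_ge0 d; lra.
set eta2 := e / k.
have eta20 : 0 < eta2 by rewrite divr_gt0.
have keta : k * eta2 = e by rewrite /eta2 mulrC divfK // gt_eqF.
have m0 : 0 < Num.min eta1 eta2 by rewrite lt_min eta10 eta20.
exists (Num.min eta1 eta2) => // y Iy.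
have le1 : Num.min eta1 eta2 <= eta1 by rewrite ge_min lexx.
have le2 : Num.min eta1 eta2 <= eta2 by rewrite ge_min lexx orbT.
have [->|yx] := eqVneq y x; first by move=> _; rewrite subrr normr0.
move=> yxe; have := H1 y Iy yx (lt_le_trans yxe le1).
set Q := (F y - F x) / (y - x) => HQ.
have yx0 : y - x != 0 by rewrite subr_eq0.
have -> : F y - F x = Q * (y - x) by rewrite /Q divfK.
rewrite normrM.
have hQ : `|Q| <= `|Q - d| + `|d|.
  by apply: le_trans (ler_normD _ _); rewrite subrK.
have := normr_ge0 (y - x); have := normr_ge0 Q; have := normr_ge0 (Q - d).
have := lt_le_trans yxe le2.
rewrite /k in keta k0 *; nra.
Qed.
Arguments Ideriv_cont {F x d}.


Lemma Ideriv_id_on (F : R -> R) (x : R) : II x -> (forall y, II y -> F y = y) ->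
  Ideriv F x 1.
Proof.
move=> Ix HF; apply/IideriveP => e e0; exists 1 => // y Iy yx _.
by rewrite !HF // divff ?subr_eq0 // subrr normr0.
Qed.

Lemma Ideriv_comp (f g : R -> R) (x a b : R) : II x ->
  (forall y, II y -> II (f y)) -> (forall y, II y -> f y = f x -> y = x) ->
  Ideriv f x a -> Ideriv g (f x) b -> Ideriv (g \o f) x (b * a).
Proof.
move=> Ix fI finj Hf Hg; have fc := @Ideriv_cont f x a Hf.
move/IideriveP: Hf => Hf; move/IideriveP: Hg => Hg.
apply/IideriveP => e e0.
set k := `|a| + 1.
have k0 : 0 < k by rewrite /k; have := normr_ge0 a; lra.
set B := `|b| + 1.
have B0 : 0 < B by rewrite /B; have := normr_ge0 b; lra.
set e2 := e / (2 * B).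
have e20 : 0 < e2 by rewrite divr_gt0 // mulr_gt0.
have Be2 : B * e2 = e / 2 by rewrite /e2; field; rewrite gt_eqF.
set e3 := e / (2 * k).
have e30 : 0 < e3 by rewrite divr_gt0 // mulr_gt0.
have ke3 : k * e3 = e / 2 by rewrite /e3; field; rewrite gt_eqF.
have e1'0 : 0 < Num.min 1 e2 by rewrite lt_min ltr01 e20.
have [eta1 eta10 H1] := Hf _ e1'0.
have [rho rho0 Hrho] := Hg _ e30.
have [eta2 eta20 H2] := fc _ rho0.
have m0 : 0 < Num.min eta1 eta2 by rewrite lt_min eta10 eta20.
exists (Num.min eta1 eta2) => // y Iy yx yxe.
have le1 : Num.min eta1 eta2 <= eta1 by rewrite ge_min lexx.
have le2 : Num.min eta1 eta2 <= eta2 by rewrite ge_min lexx orbT.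
have fyx : f y != f x by apply/eqP => /(finj y Iy) yxeq; rewrite yxeq eqxx in yx.
have hQf := H1 y Iy yx (lt_le_trans yxe le1).
have hQg := Hrho (f y) (fI y Iy) fyx (H2 y Iy (lt_le_trans yxe le2)).
move: hQf hQg.
set Qf := (f y - f x) / (y - x); set Qg := (g (f y) - g (f x)) / (f y - f x).
move=> hQf hQg.
have QE : (g (f y) - g (f x)) / (y - x) = Qg * Qf.
  by rewrite /Qg /Qf mulrA divfK // subr_eq0.
rewrite /= QE.
have -> : Qg * Qf - b * a = (Qg - b) * Qf + b * (Qf - a) by ring.
apply: le_lt_trans (ler_normD _ _) _; rewrite (normrM (Qg - b)) (normrM b).
have hq : `|Qf| <= `|Qf - a| + `|a| by apply: le_trans (ler_normD _ _); rewrite subrK.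
have m1 : Num.min 1 e2 <= 1 by rewrite ge_min lexx.
have m2 : Num.min 1 e2 <= e2 by rewrite ge_min lexx orbT.
have qk : `|Qf| <= k by rewrite /k; lra.
have T1 : `|Qg - b| * `|Qf| <= e3 * k.
  by rewrite mulrC [e3 * _]mulrC; apply: ler_pM => //; apply: ltW.
have T2 : `|b| * `|Qf - a| <= `|b| * e2.
  by apply: ler_wpM2l; [exact: normr_ge0 | lra].
rewrite /B in Be2. lra.
Qed.
Arguments Ideriv_comp {f g x a b}.

Lemma contII_within (F : R -> R) (a b : R) : 0 <= a -> b <= 1 ->
  (forall x, II x -> contII F x) -> {within `[a, b], continuous F}.
Proof.
move=> a0 b1 HF; apply/subspace_continuousP => x /= xab.
have Ix : II x.
  by apply/IIP; move: xab; rewrite in_itv /= => /andP[h1 h2]; apply/andP; split; lra.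
apply/cvg_withinRP => e e0; have [eta eta0 H] := HF x Ix e e0.
exists eta => // y yab yx; apply: H => //.
by apply/IIP; move: yab; rewrite /= in_itv /= => /andP[h1 h2]; apply/andP; split; lra.
Qed.

Lemma pos_on_II (F : R -> R) : (forall x, II x -> contII F x) ->
  (forall x, II x -> F x != 0) -> 0 < F 0 -> forall x, II x -> 0 < F x.
Proof.
move=> Fc Fn F0 x Ix; rewrite ltNge; apply/negP => Fx.
move/IIP: (Ix) => /andP[x0 x1].
have cF : {within `[0, x], continuous F} by apply: contII_within.
have hv : Num.min (F 0) (F x) <= 0 <= Num.max (F 0) (F x).
  by rewrite ge_min le_max Fx (ltW F0) orbT.
have [c cx Fc0] := IVT x0 cF hv.
have Ic : II c.
  by apply/IIP; move: cx; rewrite in_itv /= => /andP[h1 h2]; apply/andP; split; lra.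
by move: (Fn c Ic); rewrite Fc0 eqxx.
Qed.
Arguments pos_on_II {F}.


Lemma min_on_II (F : R -> R) : (forall x, II x -> contII F x) ->
  (forall x, II x -> 0 < F x) -> exists2 m : R, 0 < m & forall x, II x -> m <= F x.
Proof.
move=> Fc Fp.
have cF : {within `[0, 1], continuous F} by apply: contII_within.
have [c c01 Hc] := EVT_min ler01 cF.
have Ic : II c by [].
exists (F c); first exact: Fp.
by move=> x Ix; apply: Hc.
Qed.
Arguments min_on_II {F}.


Lemma powR_small (d e K : R) : 0 < d -> 0 < e ->
  exists2 eta : R, 0 < eta & forall t, 0 <= t -> t <= eta -> K * t `^ d < e.
Proof.
move=> d0 e0; set c := e / (`|K| + 1).
have K1 : 0 < `|K| + 1 by have := normr_ge0 K; lra.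
have c0 : 0 < c by rewrite divr_gt0.
exists (c `^ d^-1); first by rewrite powR_gt0.
move=> t t0 teta.
have h1 : t `^ d <= c by
  rewrite -[c in _ <= c](@powRr1 _ c) ?(ltW c0)// -(@mulVf _ d) ?gt_eqF// powRrM;
  apply: ge0_ler_powR => //; [exact: ltW | rewrite nnegrE powR_ge0].
have h2 : K * t `^ d <= `|K| * t `^ d.
  by apply: ler_wpM2r; [exact: powR_ge0 | exact: ler_norm].
have h3 : `|K| * t `^ d <= `|K| * c by apply: ler_wpM2l => //; exact: normr_ge0.
have h4 : `|K| * c < e.
  rewrite /c mulrA ltr_pdivrMr // mulrC ltr_pM2l //; lra.
lra.
Qed.

Lemma holder_cont (F : R -> R) (d K : R) : 0 < d ->
  (forall t1 t2, II t1 -> II t2 -> `|F t2 - F t1| <= K * `|t2 - t1| `^ d) ->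
  forall x, II x -> contII F x.
Proof.
move=> d0 HF x Ix e e0; have [eta eta0 H] := @powR_small d e K d0 e0.
exists eta => // y Iy yx; apply: le_lt_trans (HF x y Ix Iy) _.
by apply: H; [exact: normr_ge0 | exact: ltW].
Qed.
Arguments holder_cont {F d K}.


Lemma deriv0_ge0 (F : R -> R) (d : R) : F 0 = 0 ->
  (forall y, II y -> II (F y)) -> Ideriv F 0 d -> 0 <= d.
Proof.
move=> F0 FI /IideriveP H; rewrite leNgt; apply/negP => d0.
have [eta eta0 He] := H (- d) (ltac:(lra)).
have I0 : @II R 0 by apply/IIP; rewrite lexx ler01.
have [y [Iy y0 ye]] := @II_pick 0 _ I0 eta0.
have := He y Iy y0 ye; rewrite F0 !subr0.
have ypos : 0 < y by move/IIP: Iy => /andP[h _]; rewrite lt_def y0 h.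
have := FI y Iy => /IIP /andP[Fy0 _].
have : 0 <= F y / y by rewrite divr_ge0 // ltW.
move=> hq hn; have := ler_norm (F y / y - d); lra.
Qed.
Arguments deriv0_ge0 {F d}.


Lemma ln_sub_le (x y : R) : 0 < x -> 0 < y -> ln x - ln y <= (x - y) / y.
Proof.
move=> x0 y0; rewrite -ln_div ?posrE //.
have -> : x / y = 1 + (x - y) / y by field; rewrite gt_eqF.
apply: le_ln1Dx.
have -> : (x - y) / y = x / y - 1 by field; rewrite gt_eqF.
have : 0 < x / y by rewrite divr_gt0.
lra.
Qed.
Arguments ln_sub_le {x y}.


Lemma ln_lip (m x y : R) : 0 < m -> m <= x -> m <= y ->
  `|ln x - ln y| <= `|x - y| / m.
Proof.
move=> m0 mx my.
have x0 : 0 < x by exact: (lt_le_trans m0 mx).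
have y0 : 0 < y by exact: (lt_le_trans m0 my).
have h1 := @ln_sub_le x y x0 y0; have h2 := @ln_sub_le y x y0 x0.
have iy : y^-1 <= m^-1 by rewrite lef_pV2 ?posrE.
have ix : x^-1 <= m^-1 by rewrite lef_pV2 ?posrE.
have k1 : (x - y) / y <= `|x - y| / m.
  apply: le_trans (_ : `|x - y| / y <= _).
    by rewrite ler_pM2r ?invr_gt0 // ler_norm.
  by apply: ler_wpM2l => //; exact: normr_ge0.
have k2 : (y - x) / x <= `|x - y| / m.
  apply: le_trans (_ : `|x - y| / x <= _).
    by rewrite ler_pM2r ?invr_gt0 // distrC ler_norm.
  by apply: ler_wpM2l => //; exact: normr_ge0.
rewrite ler_norml; apply/andP; split; lra.
Qed.
Arguments ln_lip {m x y}.


Lemma pdelta_bound (d C : R) (h1 : R -> R) : (pdelta d h1 <= C%:E)%E ->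
  `|ln (h1 0)| <= C /\ forall t1 t2, II t1 -> II t2 ->
    `|ln (h1 t2) - ln (h1 t1)| <= C * `|t2 - t1| `^ d.
Proof.
rewrite /pdelta => H.
set S := [set r : \bar R | exists t1 t2 : R, II t1 /\ II t2 /\ t1 <> t2 /\
       r = (`|ln (h1 t2) - ln (h1 t1)| / (`|t2 - t1| `^ d))%:E] in H.
have key : forall t1 t2, II t1 -> II t2 -> t1 <> t2 ->
    `|ln (h1 0)| + `|ln (h1 t2) - ln (h1 t1)| / (`|t2 - t1| `^ d) <= C.
  move=> t1 t2 I1 I2 t12; rewrite -lee_fin EFinD.
  apply: le_trans H; apply: leeD2l; apply: ereal_sup_ubound.
  by exists t1, t2.
have I0 : @II R 0 by apply/IIP; rewrite lexx ler01.
have I1 : @II R 1 by apply/IIP; rewrite lexx ler01.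
have a0 : `|ln (h1 0)| <= C.
  have n01 : (0:R) <> 1 by apply/eqP; rewrite eq_sym oner_neq0.
  have := key 0 1 I0 I1 n01.
  have : 0 <= `|ln (h1 1) - ln (h1 0)| / (`|1 - 0| `^ d).
    by rewrite divr_ge0 // powR_ge0.
  lra.
split => // t1 t2 I1' I2'.
have [->|t12] := eqVneq t1 t2.
  rewrite !subrr normr0; apply: mulr_ge0; last exact: powR_ge0.
  by have := normr_ge0 (ln (h1 0)); lra.
have p0 : 0 < `|t2 - t1| `^ d by rewrite powR_gt0 // normr_gt0 subr_eq0 eq_sym.
have := key t1 t2 I1' I2' (ltac:(exact/eqP)).
move=> hk.
have : `|ln (h1 t2) - ln (h1 t1)| / `|t2 - t1| `^ d <= C.
  by have := normr_ge0 (ln (h1 0)); lra.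
by rewrite ler_pdivrMr // mulrC.
Qed.
Arguments pdelta_bound {d C h1}.

Definition invII (F H : R -> R) :=
  forall x, II x -> II (F x) /\ II (H x) /\ H (F x) = x /\ F (H x) = x.

Lemma deriv_nonzero (F H F1 H1 : R -> R) : invII F H ->
  (forall x, II x -> Ideriv F x (F1 x)) -> (forall x, II x -> Ideriv H x (H1 x)) ->
  forall x, II x -> F1 x != 0.
Proof.
move=> inv DF DH x Ix.
have fI : forall y, II y -> II (F y) by move=> y /inv [].
have finj : forall y, II y -> F y = F x -> y = x.
  by move=> y Iy E; have [_ [_ [<- _]]] := inv y Iy; rewrite E; case: (inv x Ix) => _ [_ [-> _]].
have D1 := Ideriv_comp Ix fI finj (DF x Ix) (DH (F x) (fI x Ix)).
have D2 : Ideriv (H \o F) x 1 by apply: Ideriv_id_on => // y Iy /=; case: (inv y Iy) => _ [_ [-> _]].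
have := Ideriv_unique Ix D1 D2.
move=> E; apply/eqP => F0; move: E; rewrite F0 mulr0 => E0.
by move: (@oner_neq0 R); rewrite -E0 eqxx.
Qed.
Arguments deriv_nonzero {F H F1 H1}.


Lemma contII_eq (F G : R -> R) (x : R) : (forall y, II y -> F y = G y) -> II x ->
  contII F x -> contII G x.
Proof.
move=> E Ix H e e0; have [eta eta0 He] := H e e0; exists eta => // y Iy yx.
by rewrite -!E //; apply: He.
Qed.
Arguments contII_eq {F G x}.


Lemma f_facts (d : R) (f : R -> R) : 0 < d -> DiffI1delta d f ->
  exists (f1 h : R -> R) (Kf Lf : R),
  (forall x, II x -> Ideriv f x (f1 x)) /\ (forall x, II x -> 0 < f1 x) /\
      (forall t1 t2, II t1 -> II t2 -> `|ln (f1 t2) - ln (f1 t1)| <= Kf * `|t2 - t1| `^ d) /\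
      (forall t, II t -> `|ln (f1 t)| <= Lf) /\ invII f h /\
      (forall x, II x -> contII h x).
Proof.
move=> d0 [[f0 [f1' [h [Hh [_ Ch]]]]] [f1 [Df [K HK]]]].
have [h1 [Dh _]] := Ch.
have nz := deriv_nonzero Hh Df Dh.
have fI : forall y, II y -> II (f y) by move=> y /Hh [].
have I0 : @II R 0 by apply/IIP; rewrite lexx ler01.
have f10 : 0 < f1 0.
  by rewrite lt_def nz //=; apply: (deriv0_ge0 f0 fI); apply: Df.
have cf1 := holder_cont d0 HK.
have f1p := pos_on_II cf1 nz f10.
have [m m0 Hm] := min_on_II cf1 f1p.
set Kf := `|K| / m.
have Hol : forall t1 t2, II t1 -> II t2 ->
    `|ln (f1 t2) - ln (f1 t1)| <= Kf * `|t2 - t1| `^ d.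
  move=> t1 t2 I1 I2.
  apply: le_trans (ln_lip m0 (Hm _ I2) (Hm _ I1)) _.
  rewrite /Kf mulrAC ler_pM2r ?invr_gt0 //.
  apply: le_trans (HK t1 t2 I1 I2) _.
  by apply: ler_wpM2r; [exact: powR_ge0 | exact: ler_norm].
exists f1, h, Kf, (`|ln (f1 0)| + Kf); do 5?split => //.
- move=> t It.
  have hh1 := Hol 0 t I0 It.
  have : `|t - 0| `^ d <= 1.
    rewrite subr0; apply: (@le_trans _ _ (1 `^ d)); last by rewrite powR1.
    apply: ge0_ler_powR; first exact: ltW.
    - by rewrite nnegrE normr_ge0.
    - by rewrite nnegrE ler01.
    - by move/IIP: It => /andP[t0 t1]; rewrite ger0_norm.
  have Kf0 : 0 <= Kf by rewrite /Kf divr_ge0 ?normr_ge0 // ltW.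
  have : `|ln (f1 t)| <= `|ln (f1 t) - ln (f1 0)| + `|ln (f1 0)|.
    by apply: le_trans (ler_normD _ _); rewrite subrK.
  have := powR_ge0 `|t - 0| d.
  nra.
- by move=> x Ix; apply: (@Ideriv_cont h x (h1 x)); apply: Dh.
Qed.

Lemma g_pos (g g1 : R -> R) : Diff03 g -> (forall x, II x -> Ideriv g x (g1 x)) ->
  forall x, II x -> 0 < g1 x.
Proof.
move=> [[g0 [g1' [k [Hk [Cg Ck]]]]] [g1'' [Dg'' [g10 _]]]] Dg.
have [ga [Dga [gb [Dgb _]]]] := Cg.
have [k1 [Dk _]] := Ck.
have I0 : @II R 0 by apply/IIP; rewrite lexx ler01.
have nz := deriv_nonzero Hk Dg Dk.
have cga : forall x, II x -> contII ga x.
  by move=> x Ix; apply: (@Ideriv_cont ga x (gb x)); apply: Dgb.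
have E : forall y, II y -> ga y = g1 y.
  by move=> y Iy; apply: (Ideriv_unique Iy (Dga y Iy) (Dg y Iy)).
have cg1 : forall x, II x -> contII g1 x.
  by move=> x Ix; apply: (contII_eq E Ix); apply: cga.
apply: pos_on_II => //.
by rewrite -(Ideriv_unique I0 (Dg'' 0 I0) (Dg 0 I0)) g10 ltr01.
Qed.
Lemma core (d C : R) (f : R -> R) (G : set (R -> R)) : 0 < d -> 0 < C ->
  DiffI1delta d f -> G `<=` @Diff03 R ->
  exists M : R, (forall phi, A_C d C f G phi -> forall u, II u -> `|phi u| <= M) /\
  (forall u, II u -> forall e, 0 < e -> exists2 eta : R, 0 < eta &
     forall v, II v -> `|v - u| < eta -> forall phi, A_C d C f G phi -> `|phi u - phi v| < e).
Proof.
move=> d0 C0 Hf HG.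
have [f1 [h [Kf [Lf [Df [f1p [Hol [Lb [inv hc]]]]]]]]] := @f_facts d f d0 Hf.
have fI : forall y, II y -> II (f y) by move=> y /inv [].
have hI : forall y, II y -> II (h y) by move=> y /inv [_ []].
have finj : forall x y, II x -> II y -> f y = f x -> y = x.
  move=> x y Ix Iy E; have [_ [_ [<- _]]] := inv y Iy; rewrite E.
  by case: (inv x Ix) => _ [_ [-> _]].
have rep : forall phi, A_C d C f G phi -> exists h1 : R -> R,
    (pdelta d h1 <= C%:E)%E /\
    forall t, II t -> phi (f t) = ln (h1 t) - ln (f1 t).
  move=> phi [g [g1 [h1 [Gg [Dg [Dh1 [pd ->]]]]]]].
  exists h1; split => // t It.
  have D := Ideriv_comp It fI (fun y Iy => finj t y It Iy) (Df t It) (Dg (f t) (fI t It)).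
  have E := Ideriv_unique It (Dh1 t It) D.
  have gp := @g_pos g g1 (HG g Gg) Dg (f t) (fI t It).
  by rewrite E lnM ?posrE ?f1p // addrK.
have Kf0 : 0 <= Kf.
  have I0 : @II R 0 by apply/IIP; rewrite lexx ler01.
  have I1 : @II R 1 by apply/IIP; rewrite lexx ler01.
  have := Hol 0 1 I0 I1; rewrite subr0 normr1 powR1.
  by have := normr_ge0 (ln (f1 1) - ln (f1 0)); lra.
have psiHol : forall phi, A_C d C f G phi -> forall s t, II s -> II t ->
    `|phi (f s) - phi (f t)| <= (C + Kf) * `|s - t| `^ d.
  move=> phi /rep [h1 [pd E]] s t Is It; rewrite !E //.
  have [_ Hh] := pdelta_bound pd.
  have := Hh t s It Is; have := Hol t s It Is.
  have : `|ln (h1 s) - ln (f1 s) - (ln (h1 t) - ln (f1 t))| <=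
        `|ln (h1 s) - ln (h1 t)| + `|ln (f1 s) - ln (f1 t)|.
    have -> : ln (h1 s) - ln (f1 s) - (ln (h1 t) - ln (f1 t)) =
       (ln (h1 s) - ln (h1 t)) - (ln (f1 s) - ln (f1 t)) by ring.
    apply: le_trans (ler_normD _ _) _; by rewrite normrN.
  lra.
exists (2 * C + Lf); split.
  move=> phi Aphi u Iu.
  have [h1 [pd E]] := rep phi Aphi.
  have [_ [_ [_ fhu]]] := inv u Iu.
  rewrite -fhu E; last exact: hI.
  have [a0 Hh] := pdelta_bound pd.
  have It := hI u Iu; set t := h u in It *.
  have := Hh 0 t (ltac:(apply/IIP; rewrite lexx ler01)) It.
  have tp : `|t - 0| `^ d <= 1.
    rewrite subr0; apply: (@le_trans _ _ (1 `^ d)); last by rewrite powR1.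
    apply: ge0_ler_powR; first exact: ltW.
    - by rewrite nnegrE normr_ge0.
    - by rewrite nnegrE ler01.
    - by move/IIP: It => /andP[t0 t1]; rewrite ger0_norm.
  have := Lb t It.
  have : `|ln (h1 t) - ln (f1 t)| <= `|ln (h1 t) - ln (h1 0)| + `|ln (h1 0)| + `|ln (f1 t)|.
    apply: le_trans (ler_normD _ _) _; rewrite normrN lerD2r.
    by apply: le_trans (ler_normD _ _); rewrite subrK.
  have := powR_ge0 `|t - 0| d.
  nra.
move=> u Iu e e0.
have [eta0 eta00 Heta0] := @powR_small d e (C + Kf) d0 e0.
have [eta eta_0 Heta] := hc u Iu eta0 eta00.
exists eta => // v Iv vu phi Aphi.
have [_ [_ [_ fhu]]] := inv u Iu; have [_ [_ [_ fhv]]] := inv v Iv.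
rewrite -fhu -fhv.
apply: le_lt_trans (psiHol phi Aphi _ _ (hI u Iu) (hI v Iv)) _.
apply: Heta0; first exact: normr_ge0.
by rewrite distrC; apply: ltW; apply: Heta.
Qed.
Definition clamp (x : R) : R := if x <= 0 then 0 else if 1 <= x then 1 else x.

Lemma clampI x : II (clamp x).
Proof.
apply/IIP; rewrite /clamp; case: ifP => h1; first by rewrite lexx ler01.
case: ifP => h2; first by rewrite lexx ler01.
move: h1 h2 => /negbT; rewrite -ltNge => h1 /negbT; rewrite -ltNge => h2.
by apply/andP; split; apply: ltW.
Qed.

Lemma clamp_id x : II x -> clamp x = x.
Proof.
move/IIP => /andP[x0 x1]; rewrite /clamp; case: ifP => h1.
  by apply/eqP; rewrite eq_le h1 x0.
case: ifP => h2 //; by apply/eqP; rewrite eq_le h2 x1.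
Qed.

Lemma clamp_lip x y : `|clamp y - clamp x| <= `|y - x|.
Proof.
have n1 := ler_norm (y - x); have n2 := ler_norm (x - y); rewrite distrC in n2.
rewrite ler_norml; rewrite /clamp.
case: ifP => a1; case: ifP => a2; try (case: ifP => a3); try (case: ifP => a4);
  move: a1 a2; try move: a3; try move: a4;
  rewrite ?ltNge => *;
  repeat match goal with H : (_ <= _) = false |- _ => move/negbT: H; rewrite -ltNge => H end;
  repeat match goal with H : is_true (_ <= _) |- _ => move: H end;
  repeat match goal with H : is_true (_ < _) |- _ => move: H end; 
  move=> *; apply/andP; split; lra.
Qed.

Lemma clamp_idem x : clamp (clamp x) = clamp x.
Proof. by rewrite clamp_id //; exact: clampI. Qed.
Lemma W_precompact (A : set (R -> R)) (M : R) :
  (forall phi, A phi -> forall u, II u -> `|phi u| <= M) ->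
  (forall u, II u -> forall e, 0 < e -> exists2 eta : R, 0 < eta &
     forall v, II v -> `|v - u| < eta -> forall phi, A phi -> `|phi u - phi v| < e) ->
  precompact ([set phi \o clamp | phi in A] : set {family compact, R -> R}).
Proof.
move=> Hb He.
have hR : hausdorff_space R by exact: norm_hausdorff.
have := (@Ascoli R R hR [set phi \o clamp | phi in A] (@locally_compactR R)).1.
case; last by [].
split.
  move=> x; apply: (@precompact_subset _ _ `[- M, M]%classic).
    move=> r [i [phi Aphi <-] <-] /=; rewrite in_itv /= -ler_norml.
    by apply: Hb => //; exact: clampI.
  by apply: compact_precompact => //; exact: segment_compact.
move=> x E; rewrite -entourage_from_ballE => -[e e0 Hsub].
have [eta eta0 H] := He (clamp x) (clampI x) e e0.
apply/nbhs_ballP; exists eta => //= y xy i [phi Aphi <-].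
apply: Hsub => /=.
apply: H => //; first exact: clampI.
apply: le_lt_trans (clamp_lip x y) _.
by rewrite distrC.
Qed.
Definition Tc (phi : R -> R) : R -> R := phi \o clamp.

Lemma II_compact : compact (@II R).
Proof. exact: segment_compact. Qed.

Lemma Tc_cont_fam : continuous (Tc : {family compact, R -> R} -> {family compact, R -> R}).
Proof.
move=> phi.
rewrite /continuous_at.
apply/(@fam_cvgP R R compact (Tc @ (nbhs (phi : {family compact, R -> R}))) (Tc phi)).
move=> K cK P /uniform_nbhs [E [entE sub]].
apply: (filterS _ (@fam_nbhs R R compact (@II R) E phi entE II_compact)).
move=> g Hg; apply: sub => y Ky /=; apply: Hg; exact: clampI.
Qed.


Lemma Tc_cont_U : continuous (Tc : {uniform` @II R -> R} -> {family compact, R -> R}).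
Proof.
move=> phi; rewrite /continuous_at.
apply/(@fam_cvgP R R compact (Tc @ (nbhs (phi : {uniform` @II R -> R}))) (Tc phi)).
move=> K cK P /uniform_nbhs [E [entE sub]].
apply/uniform_nbhs; exists E; split => // g Hg; apply: sub => y Ky /=.
apply: Hg; exact: clampI.
Qed.

Lemma TcK phi : Tc (Tc phi) = Tc phi.
Proof. by apply: funext => x; rewrite /Tc /= clamp_idem. Qed.

Lemma final_topo (A : set (R -> R)) (M : R) :
  (forall phi, A phi -> forall u, II u -> `|phi u| <= M) ->
  (forall u, II u -> forall e, 0 < e -> exists2 eta : R, 0 < eta &
     forall v, II v -> `|v - u| < eta -> forall phi, A phi -> `|phi u - phi v| < e) ->
  compact (closure (A : set {uniform` @II R -> R})).
Proof.
move=> Hb He.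
have [K0 WK0 [cK0 clK0]] := @W_precompact A M Hb He.
pose K : set {family compact, R -> R} := K0 `&` Tc @^-1` K0.
have clK : closed K.
  have clT : closed (Tc @^-1` K0 : set {family compact, R -> R}).
    have [H _] := continuous_closedP (Tc : {family compact, R -> R} -> {family compact, R -> R}).
    exact: H Tc_cont_fam K0 clK0.
  exact: closedI.
have cK : compact K by apply: (subclosed_compact clK cK0); exact: subIsetl.
pose B : set {uniform` @II R -> R} := Tc @^-1` K.
rewrite -precompactE; exists B.
  move=> phi Aphi; rewrite /B /K /=; rewrite TcK; split; apply: WK0; exists phi => //.
split; last first.
  have [H _] := continuous_closedP (Tc : {uniform` @II R -> R} -> {family compact, R -> R}).
  exact: H Tc_cont_U K clK.
move=> F PF FB.
have [psi [Kpsi clpsi]] := cK (Tc @ F) _ FB.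
exists (Tc psi); split.
  by rewrite /B /K /= !TcK; case: Kpsi => _ H; split.
move=> Q P FQ /uniform_nbhs [E [entE sub]].
have FQ' : (Tc @ F) (Tc @` Q).
  rewrite /fmap /=; apply: filterS FQ; move=> h Qh; by exists h.
have [g [[h Qh <-] Hg]] := clpsi _ _ FQ' (@fam_nbhs R R compact (@II R) E psi entE II_compact).
exists h; split => //; apply: sub => y Iy.
have := Hg y Iy; rewrite /Tc /= clamp_id //.
Qed.
End S.

Theorem mainTheorem14 (R : realType) (delta : R) (f : R -> R) (G : set (R -> R)) :
  0 < delta -> delta < 1 / 2 ->
  DiffI1delta delta f ->
  G `<=` Diff03 (R:=R) ->
  forall C : R, 0 < C ->
    compact (closure (A_C delta C f G : set {uniform` @II R -> R})).
Proof.
move=> d0 _ Hf HG C C0.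
have [M [Hb He]] := @core R delta C f G d0 C0 Hf HG.
exact: (@final_topo R _ M Hb He).
Qed.
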